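(* Every locally Lindelöf, connected, regular space $X$ with $\psi(X)=t(X)=\omega$ has cardinality at most $\mathfrak{c}$.
   Context: $\psi(X)$ denotes pseudocharacter and $t(X)$ tightness. A space is locally Lindelöf if every point has a Lindelöf neighbourhood. *)

(* Defs.v *)
From HB Require Import structures.
From mathcomp Require Import all_boot all_order.
From mathcomp Require Import boolp classical_sets functions cardinality.
From mathcomp Require Import topology.
Set Implicit Arguments. Unset Strict Implicit. Unset Printing Implicit Defensive.
Local Open Scope classical_set_scope.

Definition lindelof {T : topologicalType} (K : set T) :=
  forall (I : Type) (U : I -> set T), (forall i, open (U i)) ->
    K `<=` \bigcup_i U i ->
    exists2 J : set I, countable J & K `<=` \bigcup_(i in J) U i.

Definition locally_lindelof (T : topologicalType) :=
  forall x : T, exists2 N : set T, nbhs x N & lindelof N.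

Definition countable_pseudocharacter (T : topologicalType) :=
  forall x : T, exists U : nat -> set T,
    (forall n, open (U n)) /\ \bigcap_n U n = [set x].

Definition countable_tightness (T : topologicalType) :=
  forall (A : set T) (x : T), closure A x ->
    exists2 B : set T, (B `<=` A /\ countable B) & closure B x.

(* Main.v *)
Require Import Defs.
From mathcomp Require Import all_boot all_order.
From mathcomp Require Import boolp classical_sets functions cardinality.
From mathcomp Require Import topology.
Local Open Scope classical_set_scope.

Inductive tree := leaf | node of (nat -> tree) & bool & (nat -> set nat).

Fixpoint enc (t : tree) (p : seq nat) (a b : nat) : Prop :=
  match t with
  | leaf => p = [::] /\ a = 0 /\ b = 0
  | node f bb l => match p with
                   | [::] => (a = 1 /\ b = nat_of_bool bb) \/ (exists i, a = i.+2 /\ l i b)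
                   | k :: p' => enc (f k) p' a b
                   end
  end.

Lemma enc_inj : injective enc.
Proof.
elim=> [|f IH bb l] [|g bb' l'] //= E.
- have H := congr1 (fun F => F [::] 0 0) E; simpl in H.
  have : (0 = 1 /\ 0 = nat_of_bool bb') \/ (exists i, 0 = i.+2 /\ l' i 0).
    by rewrite -H.
  by case=> [[]|[i []]].
- have H := congr1 (fun F => F [::] 0 0) E; simpl in H.
  have : (0 = 1 /\ 0 = nat_of_bool bb) \/ (exists i, 0 = i.+2 /\ l i 0).
    by rewrite H.
  by case=> [[]|[i []]].
have fg : f = g.
  apply/funext => k; apply: IH; apply/funext => p; apply/funext => a; apply/funext => b.
  exact: (congr1 (fun F => F (k :: p) a b) E).
have bE : bb = bb'.
  have := congr1 (fun F => F [::] 1 (nat_of_bool bb)) E => /= H.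
  have : (1 = 1 /\ nat_of_bool bb = nat_of_bool bb') \/
         (exists i, 1 = i.+2 /\ l' i (nat_of_bool bb)).
    by rewrite -H; left.
  by case=> [[_ e]|[i []]//]; move: e; case: (bb); case: (bb').
have lE : l = l'.
  apply/funext => i; apply/funext => j; apply/propext.
  have := congr1 (fun F => F [::] i.+2 j) E => /= H.
  split=> L.
    have : (i.+2 = 1 /\ j = nat_of_bool bb') \/ (exists i', i.+2 = i'.+2 /\ l' i' j).
      by rewrite -H; right; exists i.
    by case=> [[]|[i' [[->]]]].
  have : (i.+2 = 1 /\ j = nat_of_bool bb) \/ (exists i', i.+2 = i'.+2 /\ l i' j).
    by rewrite H; right; exists i.
  by case=> [[]|[i' [[->]]]].
by rewrite fg bE lE.
Qed.

Definition code (t : tree) : set nat :=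
  [set n | exists p a b, enc t p a b /\ n = pickle (p, a, b)].

Lemma code_inj : injective code.
Proof.
move=> t1 t2 E; apply: enc_inj.
apply/funext => p; apply/funext => a; apply/funext => b; apply/propext.
have H := congr1 (fun S : set nat => S (pickle (p, a, b))) E; simpl in H.
split=> h.
  have : code t2 (pickle (p, a, b)) by rewrite -E; exists p, a, b.
  by case=> p' [a' [b' [e /(pcan_inj pickleK_inv) [-> -> ->]]]].
have : code t1 (pickle (p, a, b)) by rewrite E; exists p, a, b.
by case=> p' [a' [b' [e /(pcan_inj pickleK_inv) [-> -> ->]]]].
Qed.
Section Main.
Variable X : topologicalType.
Variable x0 : X.
Variable V : X -> nat -> set X.
Hypothesis Vo : forall x n, open (V x n).
Hypothesis Vx : forall x n, V x n x.
Hypothesis Vcl : forall x y, (forall n, closure (V x n) y) -> y = x.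
Variable N : X -> set X.
Hypothesis Nn : forall x, nbhs x (N x).
Hypothesis NL : forall x, lindelof (N x).
Hypothesis tight : countable_tightness X.

Definition Op (s : nat -> X) (b : bool) (l : nat -> set nat) : X :=
 if b then xget x0 [set y | closure (range s) y /\ forall n, [set i | V y n (s i)] = l n]
 else xget x0 [set q | N (s 0) q /\ forall i n, l i n -> ~ V (s i) n q].

Fixpoint ev (t : tree) : X :=
  match t with leaf => x0 | node f b l => Op (fun i => ev (f i)) b l end.

Definition A := range ev.

Lemma A_op s b l : (forall i, A (s i)) -> A (Op s b l).
Proof.
move=> sA.
have [f fE] : exists f : nat -> tree, forall i, ev (f i) = s i.
  have H : forall i, exists t, ev t = s i.
    by move=> i; case: (sA i) => t _ e; exists t.
  by have [f fP] := choice H; exists f.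
exists (node f b l) => //=.
by have -> : (fun i => ev (f i)) = s by apply/funext.
Qed.

Lemma A_closed : closure A `<=` A.
Proof.
move=> x /tight [B [BA cB] xB].
have : B !=set0.
  by apply/set0P/negP => /eqP B0; move: xB; rewrite B0 closure0.
move=> B0.
have [s Bs] : exists s : nat -> X, B = range s.
  move/pfcard_geP: cB => [Be|]; first by case: B0 => y; rewrite Be.
  by move/surjfunPex => [s ->]; exists s.
subst B.
set T := fun n => [set i | V x n (s i)].
have : Op s true T = x.
  rewrite /Op.
  have ex : exists y, closure (range s) y /\ forall n, [set i | V y n (s i)] = T n.
    by exists x.
  have [ys yT] := xgetPex x0 ex.
  set y := xget _ _ in ys yT *.
  apply: Vcl => n C Cy.
  have : nbhs y (V y n `&` C).
    by apply: filterI => //; apply: open_nbhs_nbhs; split.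
  move=> /ys [_ [[i _ <-] [Vi Ci]]].
  have : T n i by rewrite -yT.
  by move=> Ti; exists (s i).
move=> <-; apply: A_op => i.
by apply: BA; exists i.
Qed.

Lemma N_sub x : A x -> N x `<=` A.
Proof.
move=> Ax p Np; apply: contrapT => nAp.
have mex : forall y, exists n, A y -> ~ V y n p.
  move=> y; case: (pselect (A y)) => Ay; last by exists 0.
  apply: contrapT => H.
  have : p = y.
    apply: Vcl => n; apply: subset_closure.
    by apply: contrapT => nV; apply: H; exists n.
  by move=> e; apply: nAp; rewrite e.
have [m mP] := choice mex.
pose U (o : option X) : set X :=
  match o with None => ~` A
  | Some y => if pselect (A y) then V y (m y) else set0 end.
have Uo : forall o, open (U o).
  case=> [y|] /=; last exact: closed_openC A_closed.
  by case: pselect => ?; [apply: Vo | apply: open0].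
have NU : N x `<=` \bigcup_i U i.
  move=> z Nz; case: (pselect (A z)) => Az.
    exists (Some z); first by []. by rewrite /U; case: (pselect (A z)) => /= H; [apply: Vx | case: H].
  by exists None.
have [J cJ NJ] := NL x _ U Uo NU.
have [f finj] := countable_injP J cJ.
pose S := [set y | (J (Some y) /\ A y)] `|` [set x].
have cS : countable S.
  apply/countable_injP; exists (fun y => if y == x then 0 else (f (Some y)).+1).
  move=> y1 y2; rewrite !inE => Sy1 Sy2.
  case: eqP => [->|ne1]; case: eqP => [->|ne2] //.
  move=> [] /finj; rewrite !inE => e.
  case: Sy1 => [[J1 _]|//]; case: Sy2 => [[J2 _]|//].
  by case: (e J1 J2).
have [s Ss] : exists s : nat -> X, S = range s.
  move/pfcard_geP: cS => [Se|].
    have Sx : S x by right.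
    by rewrite Se in Sx.
  by move/surjfunPex => [s ->]; exists s.
pose s' (i : nat) := if i is i'.+1 then s i' else x.
have s'A : forall i, A (s' i).
  case=> [|i] //=.
  have : S (s i) by rewrite Ss; exists i.
  by case=> [[]//|->].
pose l (i : nat) := [set m (s' i)].
have := A_op s' false l s'A.
rewrite /Op.
have ex : exists q, N (s' 0) q /\ forall i n, l i n -> ~ V (s' i) n q.
  exists p; split => // i n -> .
  exact: (mP (s' i) (s'A i)).
have [Nq qV] := xgetPex x0 ex.
set q := xget _ _ in Nq qV *.
move=> Aq.
have [j Jj Uq] := NJ _ Nq.
case: j Jj Uq => [y|] Jy /=; last by [].
case: pselect => // Ay Vq.
have : S y by left.
rewrite Ss => -[i _ ei].
by apply: (qV i.+1 (m y)) => //=; rewrite /l /= ei.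
Qed.

Lemma A_open : open A.
Proof.
rewrite openE => x Ax.
rewrite /interior /=; exact: (filterS (N_sub x Ax) (Nn x)).
Qed.

End Main.

Theorem mainTheorem13 (X : topologicalType) :
  locally_lindelof X -> connected [set: X] -> regular_space X ->
  countable_pseudocharacter X -> countable_tightness X ->
  ([set: X] #<= [set: set nat])%card.
Proof.
move=> LL conX reg psi tight.
case: (pselect (exists x : X, True)) => [[x0 _]|nX]; last first.
  apply/pcard_injP; exists (fun _ => set0) => x y.
  by case: nX; exists x.
have Vex : forall x n, exists W : set X,
    [/\ open W, W x & forall y, closure W y -> (projT1 (cid (psi x))) n y].
  move=> x n.
  set U := projT1 (cid (psi x)).
  have [Uo UE] := projT2 (cid (psi x)); rewrite -/U in Uo UE.
  have Ux : U n x.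
    have : (\bigcap_n U n) x by rewrite UE.
    by move=> /(_ n I).
  have : nbhs x (U n) by apply: open_nbhs_nbhs; split.
  move=> /reg [C Cx CU].
  exists (interior C); split.
  - exact: open_interior.
  - exact: Cx.
  - by move=> y yC; apply: CU; apply: (closureS (@interior_subset _ C)).
have Vex2 : forall x, exists W : nat -> set X, forall n,
    [/\ open (W n), W n x & forall y, closure (W n) y -> (projT1 (cid (psi x))) n y].
  by move=> x; have [W WP] := choice (Vex x); exists W.
have [V0 V0P] := choice Vex2.
have Vo : forall x n, open (V0 x n) by move=> x n; case: (V0P x n).
have Vx : forall x n, V0 x n x by move=> x n; case: (V0P x n).
have Vcl : forall x y, (forall n, closure (V0 x n) y) -> y = x.
  move=> x y H.
  have [_ UE] := projT2 (cid (psi x)).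
  have : (\bigcap_n (projT1 (cid (psi x))) n) y.
    by move=> n _; case: (V0P x n) => _ _; apply; apply: H.
  by rewrite UE.
have Nex : forall x : X, exists N : set X, nbhs x N /\ lindelof N.
  by move=> x; case: (LL x) => N ? ?; exists N.
have [N NP] := choice Nex.
have Nn : forall x, nbhs x (N x) by move=> x; case: (NP x).
have NL : forall x, lindelof (N x) by move=> x; case: (NP x).
have Acl := A_closed X x0 V0 Vo Vx Vcl N tight.
have Aop := A_open X x0 V0 Vo Vx Vcl N Nn NL tight.
have AT : A X x0 V0 N = setT.
  apply: conX.
  - by exists x0; exists leaf.
  - by exists (A X x0 V0 N) => //; rewrite setTI.
  - by exists (A X x0 V0 N) => //; rewrite setTI.
have exA : forall x, exists t, ev X x0 V0 N t = x.
  move=> x; have : A X x0 V0 N x by rewrite AT.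
  by case=> t _ e; exists t.
have [g gP] := choice exA.
apply/pcard_injP; exists (fun x => code (g x)) => x y _ _ /code_inj e.
by rewrite -(gP x) -(gP y) e.
Qed.
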